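(* Let $n=2t$, and let $\varphi:\mathbb{F}_{2^t}\times\mathbb{F}_{2^t}\to\mathbb{F}_{2^n}$ be an $\mathbb{F}_2$-linear bijection. Let $Q(x)=\sum_{i=1}^{t-1}Tr_1^n(x^{2^i+1})+Tr_1^{t}(x^{2^{t}+1})$ on $\mathbb{F}_{2^n}$ and $\tilde Q=Q\circ\varphi$. Let $G(x,y)=Tr_1^t(xy)$ on $\mathbb{F}_{2^t}\times\mathbb{F}_{2^t}$, and suppose $\alpha_1,\alpha_2,\alpha_3,\alpha_4,\beta,\gamma\in\mathbb{F}_{2^t}$ and $c\in\mathbb{F}_2$ satisfy $\tilde Q(x,y)=G(\alpha_1x+\alpha_2,\alpha_3y+\alpha_4)+Tr_1^t(\beta x)+Tr_1^t(\gamma y)+c$ for all $x,y$. Let $\pi$ be a complete mapping polynomial over $\mathbb{F}_{2^t}$, $h$ any polynomial over $\mathbb{F}_{2^t}$, and $f(x,y)=Tr_1^t(x\pi(y))+Tr_1^t(h(y))$. Then $$F(x,y)=f(\alpha_1x+\alpha_2,\alpha_3y+\alpha_4)+G(\alpha_1x+\alpha_2,\alpha_3y+\alpha_4)+Tr_1^t(\beta x)+Tr_1^t(\gamma y)+c$$ is bent-negabent, in the sense that $F\circ\varphi^{-1}:\mathbb{F}_{2^n}\to\mathbb{F}_2$ is bent-negabent.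
   Context: $Tr_1^m(z)=z+z^2+\dots+z^{2^{m-1}}$; $Tr=Tr_1^n$. A polynomial $\pi$ over $\mathbb{F}_{2^t}$ is a complete mapping polynomial if both $\pi(y)$ and $\pi(y)+y$ are permutations of $\mathbb{F}_{2^t}$. Fix a self-dual basis $\{\alpha_i'\}$ of $\mathbb{F}_{2^n}$ over $\mathbb{F}_2$ ($Tr(\alpha_i'\alpha_j')=\delta_{ij}$), identify $\mathbb{F}_{2^n}$ with $\mathbb{F}_2^n$ via coordinates, and let $wt(x)$ be the number of nonzero coordinates. For $g:\mathbb{F}_{2^n}\to\mathbb{F}_2$: $g$ is bent if $\left|\sum_x(-1)^{g(x)+Tr(\mu x)}\right|=2^{n/2}$ for all $\mu$; negabent if $\left|\sum_x(-1)^{g(x)+Tr(\mu x)}\mathrm{i}^{wt(x)}\right|=2^{n/2}$ for all $\mu$ ($\mathrm{i}=\sqrt{-1}$); bent-negabent if both. *)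

(* Defs.v *)
From HB Require Import structures.
From mathcomp Require Import all_boot all_order all_algebra all_field.
Set Implicit Arguments. Unset Strict Implicit. Unset Printing Implicit Defensive.
Import Order.TTheory GRing.Theory Num.Theory.
Local Open Scope ring_scope.

Definition trace_fld (F : fieldType) (m : nat) (z : F) : F :=
  \sum_(i < m) z ^+ (2 ^ i).

(* Boolean (F_2-valued) version: F_2 = {false, true}, 1 <-> true.
   Where applied, the trace lies in the prime field {0,1}. *)
Definition tr (F : fieldType) (m : nat) (z : F) : bool := trace_fld m z == 1.

Definition Qfun (L : fieldType) (t : nat) (x : L) : bool :=
  (\big[addb/false]_(1 <= i < t) tr (2 * t) (x ^+ (2 ^ i + 1)))
  (+) tr t (x ^+ (2 ^ t + 1)).

Definition Gfun (K : fieldType) (t : nat) (x y : K) : bool := tr t (x * y).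

Definition complete_mapping (K : fieldType) (p : {poly K}) : Prop :=
  injective (fun y => p.[y]) /\ injective (fun y => p.[y] + y).

Definition self_dual (L : fieldType) (n : nat) (a : 'I_n -> L) : Prop :=
  forall i j, trace_fld n (a i * a j) = (i == j)%:R.

(* Coordinates w.r.t. a self-dual basis a: x = sum_i Tr(a_i x) a_i,
   so wt x = #{ i | Tr(a_i x) = 1 }. *)
Definition wt (L : fieldType) (n : nat) (a : 'I_n -> L) (x : L) : nat :=
  #|[set i : 'I_n | tr n (a i * x)]|.

Definition sgn (b : bool) : algC := (-1) ^+ b.

Definition bent (L : finFieldType) (n : nat) (g : L -> bool) : Prop :=
  forall mu : L,
    `| \sum_(x : L) sgn (g x (+) tr n (mu * x)) | = 2 ^+ (n %/ 2).

Definition negabent (L : finFieldType) (n : nat) (a : 'I_n -> L)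
    (g : L -> bool) : Prop :=
  forall mu : L,
    `| \sum_(x : L) sgn (g x (+) tr n (mu * x)) * 'i ^+ (wt a x) |
      = 2 ^+ (n %/ 2).

Definition bent_negabent (L : finFieldType) (n : nat) (a : 'I_n -> L)
    (g : L -> bool) : Prop := bent n g /\ negabent a g.

(* Main.v *)
Require Import Defs.
From HB Require Import structures.
From mathcomp Require Import all_boot all_order all_algebra all_field.
From mathcomp Require Import zify ring.
Import Order.TTheory GRing.Theory Num.Theory.
Local Open Scope ring_scope.
Set Implicit Arguments. Unset Strict Implicit.

Section Char2.
Variable F : fieldType.
Hypothesis two0 : (2%:R : F) = 0.

Lemma addxx (x : F) : x + x = 0.
Proof. by rewrite -mulr2n -mulr_natr two0 mulr0. Qed.

Lemma sqrD2 (x y : F) : (x + y) ^+ 2 = x ^+ 2 + y ^+ 2.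
Proof. by rewrite sqrrD -mulr_natr two0 mulr0 addr0. Qed.

Lemma frobD i (x y : F) : (x + y) ^+ (2 ^ i) = x ^+ (2 ^ i) + y ^+ (2 ^ i).
Proof.
elim: i x y => [|i IH] x y; first by rewrite !expr1.
by rewrite expnS !exprM sqrD2 IH.
Qed.

Lemma frob_sum i (I : Type) (r : seq I) (P : pred I) (G : I -> F) :
  (\sum_(j <- r | P j) G j) ^+ (2 ^ i) = \sum_(j <- r | P j) G j ^+ (2 ^ i).
Proof.
apply: (big_morph (fun z : F => z ^+ (2 ^ i))).
- by move=> a b; rewrite frobD.
- by rewrite expr0n expn_eq0.
Qed.

Lemma natr_addb (a b : bool) : ((a (+) b)%:R : F) = a%:R + b%:R.
Proof. by case: a; case: b => //=; rewrite ?addr0 ?add0r // -[1 + 1]/(2%:R) two0. Qed.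

Lemma b2f_inj (a b : bool) : (a%:R : F) = b%:R -> a = b.
Proof.
case: a; case: b => //= H.
- by move/eqP: H; rewrite oner_eq0.
- by move/eqP: H; rewrite eq_sym oner_eq0.
Qed.

Variable m : nat.
Local Notation T := (trace_fld m).

Lemma T_add (x y : F) : T (x + y) = T x + T y.
Proof. by rewrite /trace_fld -big_split; apply: eq_bigr => i _; rewrite frobD. Qed.

Lemma T_sq (x : F) : T x ^+ 2 = T (x ^+ 2).
Proof.
rewrite /trace_fld -[2%N]/(2 ^ 1)%N frob_sum; apply: eq_bigr => i _.
by rewrite -!exprM mulnC.
Qed.

Lemma T_shift (z : F) : z ^+ (2 ^ m) = z -> T (z ^+ 2) = T z.
Proof.
move=> Hz; rewrite /trace_fld.
case: m Hz => [|k] Hz; first by rewrite !big_ord0.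
rewrite big_ord_recr big_ord_recl /=. idtac.
rewrite -exprM -expnS Hz expr1 addrC; congr (_ + _).
apply: eq_bigr => i _; rewrite -exprM /bump /= add1n -expnS //.
Qed.

Lemma fix_exp (z : F) j : z ^+ (2 ^ m) = z -> (z ^+ (2 ^ j)) ^+ (2 ^ m) = z ^+ (2 ^ j).
Proof. by move=> Hz; rewrite -exprM mulnC exprM Hz. Qed.

Lemma fix_sq (z : F) : z ^+ (2 ^ m) = z -> (z ^+ 2) ^+ (2 ^ m) = z ^+ 2.
Proof. by move=> Hz; rewrite -exprM mulnC exprM Hz. Qed.

Lemma T_frob (z : F) j : z ^+ (2 ^ m) = z -> T (z ^+ (2 ^ j)) = T z.
Proof.
move=> Hz; elim: j => [|j IH]; first by rewrite expr1.
by rewrite expnSr exprM T_shift // fix_exp.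
Qed.

Lemma T01 (z : F) : z ^+ (2 ^ m) = z -> T z = (tr m z)%:R.
Proof.
move=> Hz; have H2 : T z ^+ 2 = T z by rewrite T_sq T_shift.
rewrite /tr; case: eqP => [->//|Hn] /=.
have : T z * (T z - 1) = 0 by rewrite mulrBr mulr1 -expr2 H2 subrr.
by move/eqP; rewrite mulf_eq0 subr_eq0 => /orP [/eqP//|/eqP].
Qed.

Lemma fixD (x y : F) : x ^+ (2 ^ m) = x -> y ^+ (2 ^ m) = y -> (x + y) ^+ (2 ^ m) = x + y.
Proof. by move=> Hx Hy; rewrite frobD Hx Hy. Qed.

Lemma tr_add (x y : F) : x ^+ (2 ^ m) = x -> y ^+ (2 ^ m) = y ->
  tr m (x + y) = tr m x (+) tr m y.
Proof.
move=> Hx Hy; apply: b2f_inj; rewrite natr_addb -!T01 ?fixD //.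
exact: T_add.
Qed.

Lemma T0 : T (0 : F) = 0.
Proof. by rewrite /trace_fld big1 // => i _; rewrite expr0n expn_eq0. Qed.

Lemma tr0 : tr m (0 : F) = false.
Proof. by rewrite /tr T0 eq_sym oner_eq0. Qed.

Lemma T_scal (c z : F) : c ^+ 2 = c -> T (c * z) = c * T z.
Proof.
move=> Hc; rewrite /trace_fld mulr_sumr; apply: eq_bigr => i _.
rewrite exprMn; congr (_ * _).
elim: (nat_of_ord i) => [|j IH]; first by rewrite expr1.
by rewrite expnSr exprM IH Hc.
Qed.

End Char2.

Section Fin.
Variable F : finFieldType.
Variable m : nat.
Hypothesis Hc : #|F| = (2 ^ m)%N.

Lemma two0F : (2%:R : F) = 0.
Proof. have H := card_finPcharP Hc (isT : prime 2). exact: (pcharf0 H). Qed.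

Lemma fixF (z : F) : z ^+ (2 ^ m) = z.
Proof. by rewrite -Hc expf_card. Qed.

Lemma m_gt0 : (0 < m)%N.
Proof.
case: m Hc => // H.
have := finNzRing_gt1 F; rewrite H //.
Qed.

Lemma tr_exists : exists z : F, tr m z.
Proof.
case: (boolP [exists z : F, tr m z]) => [/existsP //| /existsPn Hn].
exfalso.
pose p : {poly F} := \sum_(i < m) 'X^(2 ^ i).
have pz : forall z, p.[z] = 0.
  move=> z; rewrite /p horner_sum.
  have := Hn z; rewrite /tr => /negPf Hz.
  have H2 := T01 two0F (fixF z).
  rewrite /tr in H2; rewrite Hz in H2.
  by rewrite -[RHS]H2 /trace_fld; apply: eq_bigr => i _; rewrite hornerXn.
have mg := m_gt0.
have [k Hk] : exists k, m = k.+1 by move: mg; case: m => // k _; exists k.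
rewrite Hk in p pz.
have pn0 : p != 0.
  apply/eqP => /(congr1 (fun q : {poly F} => q`_(2 ^ k))).
  rewrite coef0 /p coef_sum (bigD1 ord_max) //= coefXn eqxx big1 ?addr0.
    by move/eqP; rewrite oner_eq0.
  move=> i Hi; rewrite coefXn eqn_exp2l //.
  case: eqP => // Hk2; exfalso; move: Hi; apply/negP; rewrite negbK.
  by apply/eqP/val_inj => /=.
have szp : (size p <= (2 ^ k).+1)%N.
  apply: leq_trans (size_sum _ _ _) _.
  apply/bigmax_leqP => i _; rewrite size_polyXn ltnS leq_exp2l //.
  by rewrite -ltnS.
have := max_poly_roots pn0 (_ : all (root p) (enum F)) (enum_uniq F).
rewrite -cardE Hc Hk.
have Hr : all (root p) (enum F) by apply/allP => z _; apply/eqP; exact: pz.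
move=> /(_ Hr) H.
have := leq_trans H szp.
rewrite expnS ltnS mul2n -addnn => H3.
have H4 : (0 < 2 ^ k)%N by rewrite expn_gt0.
have : (2 ^ k + 2 ^ k <= 2 ^ k)%N by [].
rewrite -{3}(add0n (2 ^ k)%N) leq_add2r leqn0 => /eqP H5.
by rewrite H5 in H4.
Qed.

End Fin.

Lemma sgn_addb a b : sgn (a (+) b) = sgn a * sgn b.
Proof. exact: signr_addb. Qed.

Lemma sgnK a : sgn a * sgn a = 1.
Proof. by rewrite -sgn_addb addbb. Qed.

Lemma sgn_inj a b : sgn a = sgn b -> a = b.
Proof.
rewrite /sgn; case: a; case: b => //= /eqP; rewrite ?expr1 ?expr0.
- by rewrite -subr_eq0 -opprD oppr_eq0 -[1 + 1]/(2%:R : algC) pnatr_eq0.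
- by rewrite eq_sym -subr_eq0 -opprD oppr_eq0 -[1 + 1]/(2%:R : algC) pnatr_eq0.
Qed.

Section CharSum.
Variable F : finFieldType.

Definition xadd (chi : F -> bool) := forall x y, chi (x + y) = chi x (+) chi y.

Lemma char_sum_triv (chi : F -> bool) :
  (forall x, chi x = false) -> \sum_x sgn (chi x) = #|F|%:R.
Proof.
move=> H; rewrite (eq_bigr (fun _ => 1)); first by rewrite sumr_const.
by move=> x _; rewrite H.
Qed.

Lemma char_sum0 (chi : F -> bool) x0 :
  xadd chi -> chi x0 -> \sum_x sgn (chi x) = 0.
Proof.
move=> Ha Hx0.
set S := \sum_x _.
have HS : S = - S.
  rewrite {1}/S (reindex_inj (addIr x0)) /= /S -sumrN; apply: eq_bigr => x _.
  by rewrite Ha Hx0 /sgn addbT signrN.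
have : S *+ 2 == 0 by rewrite mulr2n {1}HS addNr.
by rewrite mulrn_eq0 orFb => /eqP.
Qed.

End CharSum.

Section KField.
Variable K : finFieldType.
Variable t : nat.
Hypothesis HK : #|K| = (2 ^ t)%N.

Lemma trK_add (x y : K) : tr t (x + y) = tr t x (+) tr t y.
Proof. by apply: tr_add; [exact: two0F HK| exact: fixF|exact: fixF]. Qed.

Lemma trK0 : tr t (0 : K) = false.
Proof. by apply: tr0; exact: two0F HK. Qed.

Lemma trK_lin (a : K) : xadd (fun x => tr t (x * a)).
Proof. by move=> x y; rewrite mulrDl trK_add. Qed.

Lemma trK_nondeg (a : K) : a != 0 -> exists x, tr t (x * a).
Proof.
move=> Ha; have [z Hz] := tr_exists HK.
by exists (z / a); rewrite mulfVK.
Qed.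

Lemma trK_uniq (a b : K) : (forall x, tr t (x * a) = tr t (x * b)) -> a = b.
Proof.
move=> H; apply/eqP; rewrite -subr_eq0; apply/negPn/negP => Hab.
have [x Hx] := trK_nondeg Hab.
move: Hx; rewrite mulrBr -[_ - _]addr0 -(addxx (two0F HK) (x * b)).
rewrite addrA subrK trK_add H.
by rewrite addbb.
Qed.

Lemma add_false (l : K -> bool) : xadd l -> l 0 = false.
Proof. by move=> H; have := H 0 0; rewrite addr0 addbb. Qed.

Lemma dual (l : K -> bool) : xadd l -> exists s, forall x, tr t (x * s) = l x.
Proof.
move=> Hl.
case: (boolP [exists s, [forall x, tr t (x * s) == l x]]).
  by move/existsP => [s /forallP Hs]; exists s; move=> x; exact: (eqP (Hs x)).
move/existsPn => Hn; exfalso.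
pose S := \sum_(s : K) \sum_(x : K) sgn (tr t (x * s) (+) l x).
have S0 : S = 0.
  rewrite /S big1 // => s _.
  have := Hn s; rewrite negb_forall => /existsP [x Hx].
  apply: (@char_sum0 _ _ x).
    by move=> y z; rewrite trK_lin Hl addbACA.
  by move: Hx; case: (tr t _); case: (l x).
have S1 : S = #|K|%:R.
  rewrite /S exchange_big /= (bigD1 0) //= [X in _ + X = _]big1.
    rewrite addr0 (eq_bigr (fun _ => 1)) ?sumr_const // => s _.
    by rewrite mul0r trK0 add_false.
  move=> x Hx.
  rewrite (eq_bigr (fun s => sgn (l x) * sgn (tr t (x * s)))); last first.
    by move=> s _; rewrite sgn_addb mulrC.
  rewrite -mulr_sumr.
  have [s0 Hs0] := trK_nondeg Hx.
  rewrite (@char_sum0 _ _ s0) ?mulr0 //.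
    by move=> u v; rewrite mulrDr trK_add.
  by rewrite mulrC.
move: S1; rewrite S0 => /eqP; rewrite eq_sym pnatr_eq0 HK expn_eq0 //.
Qed.

Lemma MM (sigma : K -> K) (k : K -> bool) (l1 : K -> bool) :
  injective sigma -> xadd l1 ->
  exists b, \sum_(p : K * K) sgn (tr t (p.1 * sigma p.2) (+) l1 p.1 (+) k p.2)
            = sgn b * #|K|%:R.
Proof.
move=> Hs Hl.
have [s0 Hs0] := dual Hl.
have [g Hg1 Hg2] := injF_bij Hs.
exists (k (g s0)).
rewrite -(pair_bigA _ (fun x y => sgn (tr t (x * sigma y) (+) l1 x (+) k y))) /=.
rewrite exchange_big /= (bigD1 (g s0)) //= [X in _ + X = _]big1.
  rewrite addr0 Hg2 -(@char_sum_triv _ (fun _ => false)) // mulr_sumr.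
  by apply: eq_bigr => x _; rewrite Hs0 addbb mulr1.
move=> y Hy.
rewrite (eq_bigr (fun x => sgn (k y) * sgn (tr t (x * sigma y) (+) l1 x))); last first.
  by move=> x _; rewrite sgn_addb mulrC.
rewrite -mulr_sumr.
case: (boolP [exists x, tr t (x * sigma y) (+) l1 x]).
  move/existsP => [x Hx]; rewrite (@char_sum0 _ _ x) ?mulr0 //.
  by move=> u v; rewrite trK_lin Hl addbACA.
move/existsPn => Hn; exfalso; move/negP: Hy; apply.
apply/eqP; rewrite -[y]Hg1; congr g.
apply: trK_uniq => x; rewrite Hs0.
by have := Hn x; case: (tr t _); case: (l1 x).
Qed.

End KField.

Lemma natr_odd (F : fieldType) (two0 : (2%:R : F) = 0) n : (n%:R : F) = (odd n)%:R.
Proof.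
elim: n => [//|n IH]; rewrite -addn1 natrD IH /= oddD /= addbT -[~~ odd n]addbT.
by rewrite natr_addb.
Qed.



Section LField.
Variable L : finFieldType.
Variable t : nat.
Hypothesis HL : #|L| = (2 ^ (2 * t))%N.
Local Notation n := (2 * t)%N.
Variable a : 'I_n -> L.
Hypothesis Ha : self_dual a.

Let two0 : (2%:R : L) = 0 := two0F HL.
Local Notation T := (trace_fld n).

Lemma TL_sum (I : Type) (r : seq I) (P : pred I) (G : I -> L) :
  T (\sum_(i <- r | P i) G i) = \sum_(i <- r | P i) T (G i).
Proof. apply: (big_morph T); [move=> x y; exact: T_add| exact: T0]. Qed.

Lemma TL01 (z : L) : T z = (tr n z)%:R.
Proof. by have := T01 two0 (fixF HL z). Qed.

Lemma trL_add (x y : L) : tr n (x + y) = tr n x (+) tr n y.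
Proof. by apply: tr_add; [exact: two0| exact (fixF HL x)|exact (fixF HL y)]. Qed.

Definition co (k : 'I_n) (z : L) := tr n (a k * z).

Lemma co_add k x y : co k (x + y) = co k x (+) co k y.
Proof. by rewrite /co mulrDr trL_add. Qed.

Lemma T_scalb (b : bool) (z : L) : T ((b%:R : L) * z) = b%:R * T z.
Proof. by apply: T_scal; case: b; rewrite ?expr0n ?expr1n. Qed.

Definition E (b : {ffun 'I_n -> bool}) : L := \sum_k (b k)%:R * a k.

Lemma co_E b j : co j (E b) = b j.
Proof.
apply: (@b2f_inj L); rewrite /co -TL01 /E mulr_sumr TL_sum (bigD1 j) //= big1.
  by rewrite addr0 mulrCA T_scalb Ha eqxx mulr1.
by move=> k Hk; rewrite mulrCA T_scalb Ha eq_sym (negPf Hk) mulr0.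
Qed.

Lemma E_inj : injective E.
Proof. by move=> b1 b2 H; apply/ffunP => j; rewrite -!co_E H. Qed.

Lemma expand (z : L) : z = \sum_k (co k z)%:R * a k.
Proof.
have : z \in codom E.
  apply: (inj_card_onto E_inj).
  by rewrite card_ffun card_bool card_ord HL.
move/codomP => [b ->].
by rewrite {1}/E; apply: eq_bigr => k _; rewrite co_E.
Qed.

Lemma T_a k : T (a k) = 1.
Proof.
rewrite -(T_shift (fixF HL (a k))) expr2 Ha eqxx //.
Qed.

Lemma T_prod (p q : L) : T (p * q) = (\sum_k (co k p && co k q : nat))%:R.
Proof.
rewrite {1}(expand q) mulr_sumr TL_sum natr_sum; apply: eq_bigr => k _.
rewrite mulrCA T_scalb mulrC TL01 /co [p * _]mulrC.
by case: (tr n (a k * p)); case: (tr n (a k * q)); rewrite ?mulr1 ?mulr0 ?mul1r ?mul0r.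
Qed.

Lemma T_wt (p : L) : T p = (\sum_k (co k p : nat))%:R.
Proof.
rewrite {1}(expand p) TL_sum natr_sum; apply: eq_bigr => k _.
by rewrite T_scalb T_a mulr1.
Qed.

Lemma wtE (p : L) : wt a p = (\sum_k (co k p : nat))%N.
Proof.
rewrite /wt -sum1_card big_mkcond /=; apply: eq_bigr => k _.
by rewrite inE /co; case: (tr n _).
Qed.

Lemma tr_wt (p : L) : tr n p = odd (wt a p).
Proof. by apply: (@b2f_inj L); rewrite -TL01 T_wt wtE natr_odd. Qed.

Lemma tr_prod (p q : L) : tr n (p * q) = odd (\sum_k (co k p && co k q : nat)).
Proof. by apply: (@b2f_inj L); rewrite -TL01 T_prod natr_odd. Qed.

Lemma wt_add (p q : L) :
  (wt a (p + q) + 2 * \sum_k (co k p && co k q : nat) = wt a p + wt a q)%N.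
Proof.
rewrite !wtE big_distrr /= -!big_split /=; apply: eq_bigr => k _.
by rewrite co_add; case: (co k p); case: (co k q).
Qed.

Lemma iwt_add (p q : L) :
  'i ^+ (wt a (p + q)) = 'i ^+ (wt a p) * 'i ^+ (wt a q) * sgn (tr n (p * q)) :> algC.
Proof.
rewrite -exprD -wt_add exprD exprM sqrCi tr_prod /sgn signr_odd -mulrA.
by rewrite -exprD addnn -signr_odd odd_double expr0 mulr1.
Qed.

End LField.

Section QPolar.
Variable L : finFieldType.
Variable t : nat.
Hypothesis HL : #|L| = (2 ^ (2 * t))%N.
Local Notation n := (2 * t)%N.
Let two0 : (2%:R : L) = 0 := two0F HL.
Local Notation T := (trace_fld n).
Local Notation T1 := (trace_fld t).

Let fixL (z : L) : z ^+ (2 ^ n) = z := fixF HL z.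

Lemma t_gt0 : (0 < t)%N.
Proof. by have := m_gt0 HL; rewrite muln_gt0. Qed.

Definition Qf (x : L) := \sum_(1 <= i < t) T (x ^+ (2 ^ i + 1)) + T1 (x ^+ (2 ^ t + 1)).

Lemma fixQ (x : L) : (x ^+ (2 ^ t + 1)) ^+ (2 ^ t) = x ^+ (2 ^ t + 1).
Proof.
rewrite -exprM mulnDl mul1n -expnD addnn -mul2n.
by rewrite exprD fixL addn1 exprS.
Qed.

Lemma Q_b2f (x : L) : ((Qfun t x)%:R : L) = Qf x.
Proof.
rewrite /Qfun (natr_addb two0) -(T01 two0 (fixQ x)); congr (_ + _).
rewrite (big_morph (fun b : bool => (b%:R : L)) (natr_addb two0) (erefl _)).
by apply: eq_bigr => i _; rewrite -TL01.
Qed.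


Lemma Tm_pow_add m (p q : L) i :
  trace_fld m ((p + q) ^+ (2 ^ i + 1)) =
  trace_fld m (p ^+ (2 ^ i + 1)) + trace_fld m (q ^+ (2 ^ i + 1))
  + trace_fld m (p ^+ (2 ^ i) * q) + trace_fld m (p * q ^+ (2 ^ i)).
Proof.
rewrite addn1 !exprSr (frobD two0) mulrDr !mulrDl !(T_add two0).
rewrite [q ^+ _ * p]mulrC; ring.
Qed.

Lemma T_cross (p q : L) i : (i <= n)%N -> T (p ^+ (2 ^ i) * q) = T (p * q ^+ (2 ^ (n - i))).
Proof.
move=> Hi; rewrite -(T_frob i (fixL (p * q ^+ (2 ^ (n - i))))) exprMn -exprM -expnD subnK //.
by rewrite fixL.
Qed.

Lemma T_split (w : L) : T w = T1 w + T1 (w ^+ (2 ^ t)).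
Proof.
rewrite /trace_fld.
have -> : n = (t + t)%N by rewrite addnn mul2n.
rewrite big_split_ord /=; congr (_ + _); apply: eq_bigr => i _.
by rewrite expnD exprM.
Qed.

Lemma T1_cross (p q : L) : T1 (p ^+ (2 ^ t) * q) + T1 (p * q ^+ (2 ^ t)) = T (p * q ^+ (2 ^ t)).
Proof.
rewrite T_split exprMn -exprM -expnD addnn -mul2n fixL addrC.
by [].
Qed.

Lemma TL_sum' (I : Type) (r : seq I) (P : pred I) (G : I -> L) :
  T (\sum_(i <- r | P i) G i) = \sum_(i <- r | P i) T (G i).
Proof. apply: (big_morph T); [move=> x y; exact: T_add| exact: T0]. Qed.

Lemma T_sum_shift (p q : L) :
  \sum_(1 <= i < n) T (p * q ^+ (2 ^ i)) = T p * T q + T (p * q).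
Proof.
have Hq : \sum_(1 <= i < n) q ^+ (2 ^ i) = T q + q.
  rewrite /trace_fld -(big_mkord xpredT (fun i => q ^+ (2 ^ i))) big_ltn; last by have := t_gt0; lia.
  by rewrite expr1 [q + _]addrC -addrA (addxx two0) addr0.
rewrite -TL_sum' -mulr_sumr Hq mulrDr (T_add two0) [p * T q]mulrC T_scal //.
  by rewrite mulrC.
by rewrite (T_sq two0) T_shift // fixL.
Qed.

Lemma Qf_polar (p q : L) : Qf (p + q) = Qf p + Qf q + T p * T q + T (p * q).
Proof.
have t0 := t_gt0.
have key : \sum_(1 <= i < t) T (p ^+ (2 ^ i) * q) + \sum_(1 <= i < t) T (p * q ^+ (2 ^ i))
    + T (p * q ^+ (2 ^ t)) = T p * T q + T (p * q).
  rewrite -T_sum_shift.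
  rewrite (big_nat_rev _ _ _ _ xpredT (fun i => T (p ^+ (2 ^ i) * q))) /=.
  rewrite (eq_big_nat _ _ (F1 := fun i => T (p ^+ (2 ^ (1 + t - i.+1)) * q))
     (F2 := fun i => T (p * q ^+ (2 ^ (t + i))))); last first.
    move=> i /andP [H1 H2]; have Hi : (1 + t - i.+1 <= n)%N by lia.
    rewrite T_cross //.
    congr (T (p * q ^+ (2 ^ _))); lia.
  rewrite (@big_cat_nat _ _ _ t 1 n xpredT (fun i => T (p * q ^+ (2 ^ i)))) //=; try lia.
  rewrite (@big_ltn _ _ _ t n (fun i => T (p * q ^+ (2 ^ i)))); last by lia.
  have -> : \sum_(t.+1 <= i < n) T (p * q ^+ (2 ^ i))
          = \sum_(1 <= i < t) T (p * q ^+ (2 ^ (t + i))).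
    rewrite -addn1 addnC big_addn.
    have -> : (n - t = t)%N by lia.
    by apply: eq_bigr => i _; rewrite addnC.
  ring.
rewrite /Qf Tm_pow_add.
rewrite (eq_big_nat _ _ (fun i _ => Tm_pow_add n p q i)) !big_split /=.
rewrite -[RHS]addrA -key -T1_cross.
ring.
Qed.

End QPolar.

Lemma ni_addb (a b : bool) : (-'i) ^+ (a (+) b) * sgn (a && b) = (-'i) ^+ a * (-'i) ^+ b :> algC.
Proof.
case: a; case: b; rewrite /sgn /= ?expr0 ?expr1 ?mulr1 ?mul1r //.
by rewrite mulrNN -expr2 sqrCi.
Qed.

Lemma sgn2 b : sgn b ^+ 2 = 1.
Proof. by rewrite expr2 sgnK. Qed.

Lemma i_half (b : bool) : 'i ^+ b = (1 + 'i) / 2%:R + (1 - 'i) / 2%:R * sgn b :> algC.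
Proof.
have h2 : (2%:R : algC) != 0 by rewrite pnatr_eq0.
case: b; rewrite /sgn /= ?expr0 ?expr1; by field.
Qed.

Lemma half_norm (b1 b2 : bool) :
  `| (1 + 'i) / 2%:R * sgn b1 + (1 - 'i) / 2%:R * sgn b2 | = 1 :> algC.
Proof.
have h2 : (2%:R : algC) != 0 by rewrite pnatr_eq0.
case: b1; case: b2; rewrite /sgn /= ?expr0 ?expr1.
- have -> : (1 + 'i) / 2%:R * -1 + (1 - 'i) / 2%:R * -1 = -1 :> algC by field.
  by rewrite normrN normr1.
- have -> : (1 + 'i) / 2%:R * -1 + (1 - 'i) / 2%:R * 1 = - 'i :> algC by field.
  by rewrite normrN normCi.
- have -> : (1 + 'i) / 2%:R * 1 + (1 - 'i) / 2%:R * -1 = 'i :> algC by field.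
  by rewrite normCi.
- have -> : (1 + 'i) / 2%:R * 1 + (1 - 'i) / 2%:R * 1 = 1 :> algC by field.
  by rewrite normr1.
Qed.

Lemma alg6 (A B sc sQp sQq sab X Ya Yb : algC) : sc * sc = 1 -> X * sab = Ya * Yb ->
  A * B * sc * (sQp * sQq * sab * sc) * X = A * sQp * Ya * (B * sQq * Yb).
Proof.
move=> H1 H2.
transitivity (A * B * sQp * sQq * (sc * sc) * (X * sab)); first by ring.
by rewrite H1 H2; ring.
Qed.

Section Nega.
Variable L : finFieldType.
Variable t : nat.
Hypothesis HL : #|L| = (2 ^ (2 * t))%N.
Local Notation n := (2 * t)%N.
Variable a : 'I_n -> L.
Hypothesis Ha : self_dual a.
Let two0 : (2%:R : L) = 0 := two0F HL.

Lemma Q_polar_b (p q : L) :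
  Qfun t (p + q) = Qfun t p (+) Qfun t q (+) (tr n p && tr n q) (+) tr n (p * q).
Proof.
apply: (@b2f_inj L); rewrite (Q_b2f HL) (Qf_polar HL).
rewrite (natr_addb two0 (Qfun t p (+) Qfun t q (+) (tr n p && tr n q))).
rewrite (natr_addb two0 (Qfun t p (+) Qfun t q)) (natr_addb two0 (Qfun t p)).
rewrite !(Q_b2f HL) !(TL01 HL).
by congr (_ + _ + _); case: (tr n p); case: (tr n q); rewrite ?mulr1 ?mulr0.
Qed.

Definition psi (z : L) : algC := 'i ^+ (wt a z) * sgn (Qfun t z) * (-'i) ^+ (tr n z).

Lemma psi_add p q : psi (p + q) = psi p * psi q.
Proof.
rewrite /psi (iwt_add HL Ha) Q_polar_b (trL_add HL).
rewrite (sgn_addb (Qfun t p (+) Qfun t q (+) (tr n p && tr n q))).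
rewrite (sgn_addb (Qfun t p (+) Qfun t q)) (sgn_addb (Qfun t p)).
apply: alg6; first exact: sgnK.
exact: ni_addb.
Qed.

Lemma psi_sq z : psi z ^+ 2 = 1.
Proof.
rewrite /psi !exprMn sgn2 mulr1 ![_ ^+ _ ^+ 2]exprAC sqrrN sqrCi.
by rewrite (tr_wt HL Ha) -[in X in X * _]signr_odd -exprD addnn -signr_odd odd_double.
Qed.

Definition ell (z : L) := psi z == -1.

Lemma sgn_ell z : sgn (ell z) = psi z.
Proof.
rewrite /ell; case: eqP => [->//|H].
have := psi_sq z; move/eqP; rewrite sqrf_eq1 => /orP [/eqP->//|/eqP //].
Qed.

Lemma ell_add : xadd ell.
Proof. by move=> x y; apply: sgn_inj; rewrite sgn_addb !sgn_ell psi_add. Qed.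

Lemma iwt_ell z : 'i ^+ (wt a z) = sgn (ell z) * sgn (Qfun t z) * 'i ^+ (tr n z).
Proof.
rewrite sgn_ell /psi.
have h1 : (-'i) ^+ (tr n z) * 'i ^+ (tr n z) = 1 :> algC.
  by rewrite -exprMn mulNr -expr2 sqrCi opprK expr1n.
have h2 := sgnK (Qfun t z).
move: h1 h2; set A := 'i ^+ (wt a z); set s := sgn (Qfun t z).
set Y := (-'i) ^+ (tr n z); set Z := 'i ^+ (tr n z).
move=> h1 h2.
transitivity (A * (s * s) * (Y * Z)); first by rewrite h1 h2 !mulr1.
ring.
Qed.


Lemma nega_core (g Hf : L -> bool) :
  (forall z, Hf z = g z (+) Qfun t z) ->
  (forall l, xadd l -> exists b, \sum_z sgn (Hf z (+) l z) = sgn b * 2 ^+ t) ->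
  forall mu : L,
  `| \sum_z sgn (g z (+) tr n (mu * z)) * 'i ^+ (wt a z) | = 2 ^+ t :> algC.
Proof.
move=> HH Hbent mu.
pose l := fun z => tr n (mu * z) (+) ell z.
pose l2 := fun z => l z (+) tr n z.
have Hl : xadd l.
  by move=> x y; rewrite /l mulrDr (trL_add HL) ell_add addbACA.
have Hl2 : xadd l2.
  by move=> x y; rewrite /l2 Hl (trL_add HL) addbACA.
have [b1 E1] := Hbent l Hl.
have [b2 E2] := Hbent l2 Hl2.
transitivity `| \sum_z ((1 + 'i) / 2%:R * sgn (Hf z (+) l z) + (1 - 'i) / 2%:R * sgn (Hf z (+) l2 z)) |.
  congr (`| _ |); apply: eq_bigr => z _.
  rewrite HH /l2 /l iwt_ell i_half.
  move: (g z) (Qfun t z) (tr n (mu * z)) (ell z) (tr n z) => b0 b5 b6 b3 b4.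
  rewrite !sgn_addb; ring.
rewrite big_split /= -!mulr_sumr E1 E2.
have -> : (1 + 'i) / 2%:R * (sgn b1 * 2 ^+ t) + (1 - 'i) / 2%:R * (sgn b2 * 2 ^+ t)
  = ((1 + 'i) / 2%:R * sgn b1 + (1 - 'i) / 2%:R * sgn b2) * 2 ^+ t :> algC by ring.
rewrite normrM half_norm mul1r ger0_norm // exprn_ge0 // ler0n.
Qed.

End Nega.

Unset Implicit Arguments.

Lemma trL1 (L : finFieldType) t (HL : #|L| = (2 ^ (2 * t))%N) : tr (2 * t) (1 : L) = false.
Proof.
rewrite /tr /trace_fld (eq_bigr (fun _ => 1)); last by move=> i _; rewrite expr1n.
rewrite sumr_const card_ord -mulr_natl mulr1 natrM (two0F HL) mul0r.
by rewrite eq_sym oner_eq0.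
Qed.

Lemma xor_cancel (A B G C1 C2 c : bool) :
  (A (+) B (+) G (+) C1 (+) C2 (+) c) (+) (G (+) C1 (+) C2 (+) c) = A (+) B.
Proof. by case: A; case: B; case: G; case: C1; case: C2; case: c. Qed.

Theorem theorem8 (t : nat) (K L : finFieldType)
  (HK : #|K| = (2 ^ t)%N) (HL : #|L| = (2 ^ (2 * t))%N)
  (phi : K * K -> L)
  (phi_add : forall x1 y1 x2 y2,
      phi (x1 + x2, y1 + y2) = phi (x1, y1) + phi (x2, y2))
  (phi_bij : bijective phi)
  (a1 a2 a3 a4 beta gamma : K) (c : bool)
  (HQ : forall x y : K,
      Qfun t (phi (x, y)) =
      Gfun t (a1 * x + a2) (a3 * y + a4) (+) tr t (beta * x)
        (+) tr t (gamma * y) (+) c)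
  (pi h : {poly K}) (Hpi : complete_mapping pi)
  (basis : 'I_(2 * t) -> L) (Hbasis : self_dual basis)
  (g : L -> bool)
  (Hg : forall x y : K,
      let f := fun u v : K => tr t (u * pi.[v]) (+) tr t h.[v] in
      g (phi (x, y)) =
        f (a1 * x + a2) (a3 * y + a4) (+) Gfun t (a1 * x + a2) (a3 * y + a4)
        (+) tr t (beta * x) (+) tr t (gamma * y) (+) c) :
  bent_negabent basis g.
Proof.
have t0 := m_gt0 HK.
have two0K := two0F HK.
have two0L := two0F HL.
have phi0 : phi (0, 0) = 0.
  have h0 := phi_add 0 0 0 0; rewrite !addr0 in h0.
  by apply: (addrI (phi (0, 0))); rewrite addr0 -h0.
have phiD : forall x y, phi (x, y) = phi (x, 0) + phi (0, y).
  by move=> x y; rewrite -phi_add addr0 add0r.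
have phi_inj : injective phi := bij_inj phi_bij.
have Lsum : forall (Hf : L -> bool) (sigma : K -> K) (l1 k : K -> bool),
    injective sigma -> xadd l1 ->
    (forall x y, Hf (phi (x, y)) = tr t (x * sigma y) (+) l1 x (+) k y) ->
    forall l, xadd l -> exists b, \sum_z sgn (Hf z (+) l z) = sgn b * 2 ^+ t.
  move=> Hf sigma l1 k Hs Hl1 Hdec l Hl.
  have Hl1' : xadd (fun x => l1 x (+) l (phi (x, 0))).
    move=> x x'; have -> : phi (x + x', 0) = phi (x, 0) + phi (x', 0).
      by rewrite -phi_add addr0.
    by rewrite Hl1 Hl addbACA.
  have [b Hb] := MM HK (fun y => k y (+) l (phi (0, y))) Hs Hl1'.
  exists b.
  rewrite (reindex phi (onW_bij _ phi_bij)) /=.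
  rewrite -natrX -HK -Hb; apply: eq_bigr => [[x y]] _ /=.
  rewrite Hdec phiD Hl; congr sgn.
  move: (tr t _) (l1 x) (k y) (l (phi (x, 0))) (l (phi (0, y))) => b1 b2 b3 b4 b5.
  by case: b1; case: b2; case: b3; case: b4; case: b5.
have Qpol := Q_polar_b HL.
have trL0 : tr (2 * t) (0 : L) = false by apply: tr0; exact: two0L.
have trK0' : tr t (0 : K) = false by apply: tr0; exact: two0K.
have E0 : Qfun t (0 : L) = false.
  have := Qpol 0 0; rewrite addr0 mulr0 trL0 andbF !addbF.
  by case: (Qfun t 0).
have Ec : tr t (a2 * a4) = c.
  have := HQ 0 0; rewrite phi0 E0 /Gfun !mulr0 !add0r trK0' !addbF.
  move/(congr1 (addb c)); rewrite addbF addbC -addbA addbb addbF => ->.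
  by [].
have a13 : a1 * a3 != 0.
  apply/negP => /eqP H13.
  set P := phi (1, 0).
  have rad : forall q, tr (2 * t) (P * q) = (tr (2 * t) P && tr (2 * t) q).
    move=> q.
    have [[x y] <-] : exists p, phi p = q.
      by case: phi_bij => finv _ H2; exists (finv q).
    have key : Qfun t (phi (1 + x, 0 + y)) (+) Qfun t P (+) Qfun t (phi (x, y)) = false.
      rewrite /P !HQ /Gfun.
      have -> : (a1 * (1 + x) + a2) * (a3 * (0 + y) + a4)
          = a1 * a4 + (a1 * a4 * x + (a2 * a3 * y + a2 * a4)) + (a1 * a3) * (y + x * y) by ring.
      have -> : (a1 * 1 + a2) * (a3 * 0 + a4) = a1 * a4 + a2 * a4 by ring.
      have -> : (a1 * x + a2) * (a3 * y + a4)
          = a1 * a4 * x + (a2 * a3 * y + a2 * a4) + (a1 * a3) * (x * y) by ring.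
      rewrite H13 !mul0r !addr0 mulrDr mulr1 add0r mulr0 trK0' !(trK_add HK) Ec.
      move: (tr t (a1 * a4)) (tr t (a1 * a4 * x)) (tr t (a2 * a3 * y)) (tr t beta)
        (tr t (beta * x)) (tr t (gamma * y)) (c) => b1 b2 b3 b4 b5 b6 b7.
      by case: b1; case: b2; case: b3; case: b4; case: b5; case: b6; case: b7.
    have := Qpol P (phi (x, y)).
    rewrite /P -phi_add -/P.
    move: key; move: (Qfun t _) (Qfun t P) (Qfun t (phi (x, y))) => q1 q2 q3.
    move: (tr _ (P * _)) (tr _ P && _) => r1 r2.
    by case: q1; case: q2; case: q3; case: r1; case: r2.
  have trP : tr (2 * t) P = false by have := rad 1; rewrite mulr1 (@trL1 L t HL) andbF.
  have Pn0 : P != 0.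
    apply/eqP; rewrite /P -phi0 => /phi_inj [] /eqP; by rewrite oner_eq0.
  have [z Hz] := tr_exists HL.
  by have := rad (z / P); rewrite mulrC divfK // Hz trP.
have a1n : a1 != 0 by apply: contraNneq a13 => ->; rewrite mul0r.
have a3n : a3 != 0 by apply: contraNneq a13 => ->; rewrite mulr0.
have affI : injective (fun y : K => a3 * y + a4).
  by move=> y1 y2 /addIr /(mulfI a3n).
case: Hpi => Hp1 Hp2.
split.
- move=> mu.
  have Hl : xadd (fun z : L => tr (2 * t) (mu * z)).
    by move=> x y; rewrite mulrDr (trL_add HL).
  pose sig := fun y => a1 * (pi.[a3 * y + a4] + (a3 * y + a4)).
  pose kk := fun y => tr t (a2 * (pi.[a3 * y + a4] + (a3 * y + a4))) (+) tr t h.[a3 * y + a4]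
        (+) tr t (gamma * y) (+) c.
  have Hsig : injective sig.
    move=> y1 y2 /(mulfI a1n) H; apply: affI; apply: Hp2; exact: H.
  have Hbx : xadd (fun x => tr t (beta * x)).
    by move=> x y; rewrite mulrDr (trK_add HK).
  have Hdec : forall x y, g (phi (x, y)) = tr t (x * sig y) (+) tr t (beta * x) (+) kk y.
    move=> x y; rewrite Hg /= /Gfun /sig /kk.
    set v := a3 * y + a4; set pv := pi.[v].
    have -> : (a1 * x + a2) * pv = x * (a1 * pv) + a2 * pv by ring.
    have -> : (a1 * x + a2) * v = x * (a1 * v) + a2 * v by ring.
    have -> : x * (a1 * (pv + v)) = x * (a1 * pv) + x * (a1 * v) by ring.
    have -> : a2 * (pv + v) = a2 * pv + a2 * v by ring.
    rewrite !(trK_add HK).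
    move: (tr t (x * (a1 * pv))) (tr t (a2 * pv)) (tr t h.[v]) (tr t (x * (a1 * v)))
      (tr t (a2 * v)) (tr t (beta * x)) (tr t (gamma * y)) (c) => b1 b2 b3 b4 b5 b6 b7 b8.
    by case: b1; case: b2; case: b3; case: b4; case: b5; case: b6; case: b7; case: b8.
  have [b Hb] := Lsum g sig _ kk Hsig Hbx Hdec _ Hl.
  by rewrite Hb normrM normr_sign mul1r mulKn // ger0_norm // exprn_ge0 // ler0n.
- move=> mu; rewrite mulKn //.
  apply: (nega_core HL Hbasis (g := g) (Hf := fun z => g z (+) Qfun t z)) => // l Hl.
  apply: (Lsum _ (fun y => a1 * pi.[a3 * y + a4]) (fun _ => false)
     (fun y => tr t (a2 * pi.[a3 * y + a4]) (+) tr t h.[a3 * y + a4])) => //.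
  + move=> y1 y2 /(mulfI a1n) H; apply: affI; apply: Hp1; exact: H.
  + move=> x y /=; rewrite Hg HQ /= xor_cancel.
    set v := a3 * y + a4; set pv := pi.[v].
    have -> : (a1 * x + a2) * pv = x * (a1 * pv) + a2 * pv by ring.
    rewrite (trK_add HK) addbF.
    by rewrite -!addbA.
Qed.
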